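(* For every $g\in\mathrm{Sp}(2,1)$, the set of traces of the elements of $g\,(1\oplus\mathrm{Sp}(1,1))\,g^{-1}$ is not contained in $\mathbb R$.
   Context: $\mathbb H$ denotes the quaternions. $\mathrm{Sp}(n,1)=\{A\in\mathrm{GL}(n+1,\mathbb H): A^*I_{n,1}A=I_{n,1}\}$ with $A^*$ the conjugate transpose and $I_{n,1}=\mathrm{diag}(1,\dots,1,-1)$. $1\oplus\mathrm{Sp}(1,1)$ is the subgroup of $\mathrm{Sp}(2,1)$ of block diagonal matrices with $1$ in the upper left entry and an element of $\mathrm{Sp}(1,1)$ in the lower right $2\times 2$ block. The trace of a quaternionic matrix is the sum of its diagonal entries. *)

(* Defs.v *)
(* Real quaternions H over an arbitrary realType R, and
   quaternionic matrices as MathComp matrices 'M[quat R]_(m,n) with the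
   (non-commutative) quaternionic operations written out explicitly. *)
From mathcomp Require Import all_boot all_order all_algebra.
From mathcomp Require Import reals.
Set Implicit Arguments. Unset Strict Implicit. Unset Printing Implicit Defensive.
Import Order.TTheory GRing.Theory Num.Theory.
Local Open Scope ring_scope.

Section Quat.
Variable R : realType.

(* a + b i + c j + d k *)
Record quat := Quat { qre : R; qi : R; qj : R; qk : R }.

Definition q0 : quat := Quat 0 0 0 0.
Definition q1 : quat := Quat 1 0 0 0.
Definition qreal (a : R) : quat := Quat a 0 0 0.
Definition qadd (p q : quat) : quat :=
  Quat (qre p + qre q) (qi p + qi q) (qj p + qj q) (qk p + qk q).
(* Hamilton product: i^2 = j^2 = k^2 = ijk = -1 *)
Definition qmul (p q : quat) : quat :=
  Quat (qre p * qre q - qi p * qi q - qj p * qj q - qk p * qk q)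
       (qre p * qi q + qi p * qre q + qj p * qk q - qk p * qj q)
       (qre p * qj q - qi p * qk q + qj p * qre q + qk p * qi q)
       (qre p * qk q + qi p * qj q - qj p * qi q + qk p * qre q).
Definition qconj (p : quat) : quat := Quat (qre p) (- qi p) (- qj p) (- qk p).

Definition qis_real (p : quat) : Prop := qi p = 0 /\ qj p = 0 /\ qk p = 0.

Definition qmulmx m n p (A : 'M[quat]_(m, n)) (B : 'M[quat]_(n, p))
  : 'M[quat]_(m, p) :=
  \matrix_(i, j) \big[qadd/q0]_(k < n) qmul (A i k) (B k j).

Definition qidmx n : 'M[quat]_n :=
  \matrix_(i, j) if i == j then q1 else q0.

Definition qadj m n (A : 'M[quat]_(m, n)) : 'M[quat]_(n, m) :=
  \matrix_(i, j) qconj (A j i).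

Definition qtrace n (A : 'M[quat]_n) : quat := \big[qadd/q0]_(i < n) A i i.

Definition qinvertible n (A : 'M[quat]_n) : Prop :=
  exists B : 'M[quat]_n, qmulmx A B = qidmx n /\ qmulmx B A = qidmx n.

Definition Inm1 n : 'M[quat]_n.+1 :=
  \matrix_(i, j) if i == j then (if i == ord_max then qreal (-1) else q1)
                 else q0.

Definition Sp_n1 n (A : 'M[quat]_n.+1) : Prop :=
  qinvertible A /\ qmulmx (qadj A) (qmulmx (Inm1 n) A) = Inm1 n.

(* 1 (+) B : block diagonal matrix with 1 in the upper left entry *)
Definition oplus1 (B : 'M[quat]_2) : 'M[quat]_3 :=
  \matrix_(i, j)
    match unlift ord0 i, unlift ord0 j with
    | Some i', Some j' => B i' j'
    | None, None => q1
    | _, _ => q0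
    end.

End Quat.

(* Main.v *)
Require Import Defs.
From mathcomp Require Import all_boot all_order all_algebra.
From mathcomp Require Import reals ring lra.
Set Implicit Arguments. Unset Strict Implicit. Unset Printing Implicit Defensive.
Import Order.TTheory GRing.Theory Num.Theory.
Local Open Scope ring_scope.

Lemma unlift0S n (i : 'I_n.+2) : (i:nat) != 0%N -> unlift ord0 i = Some (inord i.-1).
Proof.
case: unliftP => [j -> | ->] //= _; congr Some; apply/val_inj.
by rewrite /= /bump /= add0n inord_val.
Qed.

Lemma unlift00 n (i : 'I_n.+1) : (i:nat) = 0%N -> unlift ord0 i = None.
Proof. move=> H; have -> : i = ord0 by apply/val_inj. by rewrite unlift_none. Qed.

Lemma oplusE (R : realType) (B : 'M[quat R]_2) (i j : 'I_3) :
  oplus1 B i j = if (i == 0 :> nat) then (if (j == 0 :> nat) then q1 R else q0 R)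
     else if (j == 0 :> nat) then q0 R else B (inord i.-1) (inord j.-1).
Proof.
rewrite /oplus1 mxE.
case: (eqVneq (i:nat) 0%N) => Hi; case: (eqVneq (j:nat) 0%N) => Hj.
- by rewrite !unlift00.
- by rewrite unlift00 // unlift0S.
- by rewrite unlift0S // unlift00.
- by rewrite !unlift0S.
Qed.

Section S.
Variable R : realType.
Notation quat := (quat R).
Notation q0 := (q0 R). Notation q1 := (q1 R).

Definition Dm (u : quat) : 'M[quat]_2 :=
  \matrix_(i,j) if i == j then (if i == ord0 then u else q1) else q0.

Lemma DmE u (i j : 'I_2) : Dm u i j =
  if (i == j :> nat) then (if (i == 0 :> nat) then u else q1) else q0.
Proof. by rewrite mxE. Qed.

Lemma idE n (i j : 'I_n) : qidmx R n i j = if (i == j :> nat) then q1 else q0.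
Proof. by rewrite mxE. Qed.

Lemma InE (i j : 'I_2) : Inm1 R 1 i j =
  if (i == j :> nat) then (if (i == 1 :> nat) then qreal (-1) else q1) else q0.
Proof. by rewrite mxE; case: i => [[|[|?]] ?]. Qed.

Lemma qmulmxE m n p (A : 'M[quat]_(m,n)) (B : 'M[quat]_(n,p)) i j :
  qmulmx A B i j = \big[@qadd R/q0]_(k < n) qmul (A i k) (B k j).
Proof. by rewrite mxE. Qed.

Lemma qadjE m n (A : 'M[quat]_(m,n)) i j : qadj A i j = qconj (A j i).
Proof. by rewrite mxE. Qed.

Lemma quatP (p q : quat) : qre p = qre q -> qi p = qi q -> qj p = qj q -> qk p = qk q -> p = q.
Proof. by case: p; case: q => /= ? ? ? ? ? ? ? ? -> -> -> ->. Qed.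

Lemma Sp_Dm (u : quat) : qre u ^+ 2 + qi u ^+ 2 + qj u ^+ 2 + qk u ^+ 2 = 1 ->
  Sp_n1 (n:=1) (Dm u).
Proof.
move=> hu; split.
  exists (Dm (qconj u)); split; apply/matrixP => i j; rewrite qmulmxE !big_ord_recl big_ord0 /= !DmE idE;
  case: i => [[|[|?]] ?] //; case: j => [[|[|?]] ?] //=;
  apply: quatP => /=; nra.
apply/matrixP => i j; rewrite !qmulmxE !big_ord_recl !big_ord0 /= !qmulmxE !big_ord_recl !big_ord0 /= !qadjE !DmE !InE;
  case: i => [[|[|?]] ?] //; case: j => [[|[|?]] ?] //=;
  apply: quatP => /=; nra.
Qed.

Lemma oplusDmE u (i j : 'I_3) : oplus1 (Dm u) i j =
  if (i == j :> nat) then (if (i == 1 :> nat) then u else q1) else q0.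
Proof.
rewrite oplusE; case: i => [[|[|[|?]]] ?] //; case: j => [[|[|[|?]]] ?] //=;
  by rewrite DmE /= ?inordK.
Qed.

Definition i0 : 'I_3 := ord0.
Definition i1 : 'I_3 := lift ord0 ord0.
Definition i2 : 'I_3 := lift ord0 (lift ord0 ord0).

Definition Lf (a0 a1 a2 b0 b1 b2 u : quat) : quat :=
  qadd (qadd (qmul a0 (qmul u b0)) (qmul a1 (qmul u b1))) (qmul a2 (qmul u b2)).

Lemma traceE (g ginv : 'M[quat]_3) u :
  qtrace (qmulmx g (qmulmx (oplus1 (Dm u)) ginv)) =
  qadd (qadd (qadd (qadd (qadd (qmul (g i0 i0) (ginv i0 i0)) (qmul (g i1 i0) (ginv i0 i1)))
       (qmul (g i2 i0) (ginv i0 i2))) (qadd (qadd (qmul (g i0 i2) (ginv i2 i0)) (qmul (g i1 i2) (ginv i2 i1)))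
       (qmul (g i2 i2) (ginv i2 i2)))) q0)
   (Lf (g i0 i1) (g i1 i1) (g i2 i1) (ginv i1 i0) (ginv i1 i1) (ginv i1 i2) u).
Proof.
rewrite /qtrace !big_ord_recl big_ord0 !qmulmxE !big_ord_recl !big_ord0.
rewrite !qmulmxE !big_ord_recl !big_ord0 !oplusDmE /=.
rewrite /i0 /i1 /i2 /Lf.
apply: quatP => /=; ring.
Qed.

Definition qscale (r : R) (p : quat) : quat := Quat (r * qre p) (r * qi p) (r * qj p) (r * qk p).
Definition qdot (c b : quat) : R := qre c * qre b + qi c * qi b + qj c * qj b + qk c * qk b.
Definition qI : quat := Quat 0 1 0 0.
Definition qJ : quat := Quat 0 0 1 0.
Definition qK : quat := Quat 0 0 0 1.
Definition qmI : quat := Quat 0 (-1) 0 0.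
Definition qmJ : quat := Quat 0 0 (-1) 0.
Definition qmK : quat := Quat 0 0 0 (-1).

Lemma Lf_lin a0 a1 a2 b0 b1 b2 x : Lf a0 a1 a2 b0 b1 b2 x =
  qadd (qadd (qadd (qscale (qre x) (Lf a0 a1 a2 b0 b1 b2 q1))
                   (qscale (qi x) (Lf a0 a1 a2 b0 b1 b2 qI)))
             (qscale (qj x) (Lf a0 a1 a2 b0 b1 b2 qJ)))
       (qscale (qk x) (Lf a0 a1 a2 b0 b1 b2 qK)).
Proof. rewrite /Lf; apply: quatP => /=; ring. Qed.

Lemma Phi_id a0 a1 a2 b0 b1 b2 c :
  let L := Lf a0 a1 a2 b0 b1 b2 in
  qadd (qadd (qadd (qmul (L (qconj c)) q1) (qmul (L (qmul qI (qconj c))) qmI))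
     (qmul (L (qmul qJ (qconj c))) qmJ)) (qmul (L (qmul qK (qconj c))) qmK)
  = qscale 4 (qadd (qadd (qscale (qdot c b0) a0) (qscale (qdot c b1) a1)) (qscale (qdot c b2) a2)).
Proof. rewrite /Lf /qdot; apply: quatP => /=; ring. Qed.

Lemma key a0 a1 a2 b0 b1 b2 c :
  Lf a0 a1 a2 b0 b1 b2 q1 = q1 -> Lf a0 a1 a2 b0 b1 b2 qI = q0 ->
  Lf a0 a1 a2 b0 b1 b2 qJ = q0 -> Lf a0 a1 a2 b0 b1 b2 qK = q0 ->
  qdot c b0 = 0 -> qdot c b1 = 0 -> qdot c b2 = 0 -> c = q0.
Proof.
move=> H1 HI HJ HK d0 d1 d2.
have := Phi_id a0 a1 a2 b0 b1 b2 c; rewrite /= d0 d1 d2 !(Lf_lin _ _ _ _ _ _ (qmul _ _)).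
rewrite (Lf_lin _ _ _ _ _ _ (qconj c)) H1 HI HJ HK => E.
have E1 := congr1 (@qre R) E; have E2 := congr1 (@qi R) E;
have E3 := congr1 (@qj R) E; have E4 := congr1 (@qk R) E.
move: E1 E2 E3 E4 => /=.
case: c {E d0 d1 d2} => x y z w /= E1 E2 E3 E4.
rewrite /q0; congr Quat; lra.
Qed.

Definition coord (m : 'I_4) (p : quat) : R :=
  match val m with 0%N => qre p | 1%N => qi p | 2%N => qj p | _ => qk p end.

Definition k0 : 'I_4 := ord0.
Definition k1 : 'I_4 := lift ord0 ord0.
Definition k2 : 'I_4 := lift ord0 (lift ord0 ord0).
Definition k3 : 'I_4 := lift ord0 (lift ord0 (lift ord0 ord0)).

Lemma ker3 (b0 b1 b2 : quat) :
  exists c, c <> q0 /\ qdot c b0 = 0 /\ qdot c b1 = 0 /\ qdot c b2 = 0.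
Proof.
pose bq (i : 'I_3) := if (i == 0 :> nat) then b0 else if (i == 1 :> nat) then b1 else b2.
pose B : 'M[R]_(4,3) := \matrix_(m, i) coord m (bq i).
have Kn0 : kermx B != 0.
  apply/eqP => K0; have := mxrank_ker B; rewrite K0 mxrank0.
  by have := rank_leq_col B; case: (\rank B) => [|[|[|[|?]]]].
case/matrix0Pn: Kn0 => r [j Hj].
pose v := row r (kermx B).
have vB : v *m B = 0 by rewrite /v -row_mul mulmx_ker row0.
have vj : v 0 j != 0 by rewrite /v mxE.
clearbody v.
exists (Quat (v 0 k0) (v 0 k1) (v 0 k2) (v 0 k3)).
have dE : forall i : 'I_3, qdot (Quat (v 0 k0) (v 0 k1) (v 0 k2) (v 0 k3)) (bq i) = 0.
  move=> i; have := congr1 (fun M : 'M[R]_(1,3) => M 0 i) vB; rewrite !mxE big_ord_recl big_ord_recl big_ord_recl big_ord_recl big_ord0 /=.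
  rewrite !mxE /coord /qdot /= => <-; rewrite /k0 /k1 /k2 /k3; ring.
split; last first.
  split; first exact: (dE (0 : 'I_3)).
  split; first exact: (dE (1 : 'I_3)).
  exact: (dE (2 : 'I_3)).
move=> [e0 e1 e2 e3]; clear Hj; move: vj.
case: j => [[|[|[|[|?]]]] Hj] //.
- have -> : Ordinal Hj = k0 by apply/val_inj.
  by rewrite e0 eqxx.
- have -> : Ordinal Hj = k1 by apply/val_inj.
  by rewrite e1 eqxx.
- have -> : Ordinal Hj = k2 by apply/val_inj.
  by rewrite e2 eqxx.
- have -> : Ordinal Hj = k3 by apply/val_inj.
  by rewrite e3 eqxx.
Qed.

Lemma sumE (A B : 'M[quat]_3) j k : qmulmx A B j k =
  qadd (qmul (A j i0) (B i0 k)) (qadd (qmul (A j i1) (B i1 k)) (qadd (qmul (A j i2) (B i2 k)) q0)).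
Proof. by rewrite qmulmxE !big_ord_recl big_ord0. Qed.

Lemma Lf_re a0 a1 a2 b0 b1 b2 u : qre (Lf a0 a1 a2 b0 b1 b2 u) =
  qre (qmul u (qadd (qmul b0 a0) (qadd (qmul b1 a1) (qadd (qmul b2 a2) q0)))).
Proof. rewrite /Lf /=; ring. Qed.

Lemma Lf_neg a0 a1 a2 b0 b1 b2 : Lf a0 a1 a2 b0 b1 b2 (Quat (-1) 0 0 0) =
  qscale (-1) (Lf a0 a1 a2 b0 b1 b2 q1).
Proof. rewrite /Lf; apply: quatP => /=; ring. Qed.
End S.

From Stdlib Require Import Classical.

Theorem lemma4p6 (R : realType) (g ginv : 'M[quat R]_3) :
  Sp_n1 (n:=2) g ->
  qmulmx g ginv = qidmx R 3 -> qmulmx ginv g = qidmx R 3 ->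
  exists h : 'M[quat R]_2,
    Sp_n1 (n:=1) h /\
    ~ qis_real (qtrace (qmulmx g (qmulmx (oplus1 h) ginv))).
Proof.
move=> _ _ Hg2.
apply: NNPP => Hn.
pose L := Lf (g i0 i1) (g i1 i1) (g i2 i1) (ginv i1 i0) (ginv i1 i1) (ginv i1 i2).
pose K := qadd (qadd (qadd (qadd (qmul (g i0 i0) (ginv i0 i0)) (qmul (g i1 i0) (ginv i0 i1)))
       (qmul (g i2 i0) (ginv i0 i2))) (qadd (qadd (qmul (g i0 i2) (ginv i2 i0)) (qmul (g i1 i2) (ginv i2 i1)))
       (qmul (g i2 i2) (ginv i2 i2)))) (q0 R).
have HT : forall u : quat R, qre u ^+ 2 + qi u ^+ 2 + qj u ^+ 2 + qk u ^+ 2 = 1 ->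
    [/\ qi K + qi (L u) = 0, qj K + qj (L u) = 0 & qk K + qk (L u) = 0].
  move=> u hu.
  have : qis_real (qtrace (qmulmx g (qmulmx (oplus1 (Dm u)) ginv))).
    apply: NNPP => nr; apply: Hn; exists (Dm u); split=> //; exact: Sp_Dm.
  rewrite traceE => -[h1 [h2 h3]].
  by split; [exact h1 | exact h2 | exact h3].
have [p1 p2 p3] := HT (q1 R) ltac:(rewrite /=; ring).
have [m1 m2 m3] := HT (Quat (-1) 0 0 0) ltac:(rewrite /=; ring).
have [i1' i2' i3'] := HT (qI R) ltac:(rewrite /=; ring).
have [j1' j2' j3'] := HT (qJ R) ltac:(rewrite /=; ring).
have [k1' k2' k3'] := HT (qK R) ltac:(rewrite /=; ring).
have N := Lf_neg (g i0 i1) (g i1 i1) (g i2 i1) (ginv i1 i0) (ginv i1 i1) (ginv i1 i2).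
rewrite -/L in N.
have n1 : qi (L (Quat (-1) 0 0 0)) = - qi (L (q1 R)) by rewrite N /=; ring.
have n2 : qj (L (Quat (-1) 0 0 0)) = - qj (L (q1 R)) by rewrite N /=; ring.
have n3 : qk (L (Quat (-1) 0 0 0)) = - qk (L (q1 R)) by rewrite N /=; ring.
have S := congr1 (fun M : 'M[quat R]_3 => M i1 i1) Hg2.
move: S; rewrite /= sumE idE /= => S.
have Re := fun u => Lf_re (g i0 i1) (g i1 i1) (g i2 i1) (ginv i1 i0) (ginv i1 i1) (ginv i1 i2) u.
rewrite S -/L in Re.
have [c [cn0 [d0 [d1 d2]]]] := ker3 (ginv i1 i0) (ginv i1 i1) (ginv i1 i2).
have key' := @key R (g i0 i1) (g i1 i1) (g i2 i1) (ginv i1 i0) (ginv i1 i1) (ginv i1 i2) c.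
rewrite -/L in key'.
clearbody L K.
have E1 : L (q1 R) = q1 R.
  apply: quatP; [rewrite Re /=; ring | rewrite /=; lra..].
have EI : L (qI R) = q0 R.
  apply: quatP; [rewrite Re /=; ring | rewrite /=; lra..].
have EJ : L (qJ R) = q0 R.
  apply: quatP; [rewrite Re /=; ring | rewrite /=; lra..].
have EK : L (qK R) = q0 R.
  apply: quatP; [rewrite Re /=; ring | rewrite /=; lra..].
exact: cn0 (key' E1 EI EJ EK d0 d1 d2).
Qed.
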